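(* For any $z>1/\rho$ and any $t\ge0$, $$P_t(z)-P_{t+1}(z)\ge(\rho z-1)K_t(z).$$
   Context: $m$-twist system with parameter $\rho\in(0,1/2]$ on $n$ agents: at each time $t$ the agents are relabeled so that their positions satisfy $x_1(t)\le\dots\le x_n(t)$. A partition of $[n]$ into at most $m$ intervals of consecutive indices $[u_{t,l},v_{t,l}]$ (blocks) is given. The next sorted positions $y_i=x_i(t+1)$ (agents keep their ranks) satisfy, for every block $[u,v]$ and $i\in[u,v]$, $$(1-\rho)x_u+\rho x_{\min\{i+1,v\}}\le y_i\le\rho x_{\max\{i-1,u\}}+(1-\rho)x_v.$$ Define $P_t(z)=\sum_{k=1}^nx_k(t)z^k$. Let $v(k)$ be the right endpoint of the block containing $k$ at time $t$, and $K_t(z)=\sum_{k=1}^n(x_{v(k)}(t)-x_k(t))z^k$. *)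

(* Defs.v *)
(* Agents are indexed 1..n (nat), times are nat. *)
From mathcomp Require Import all_boot all_order all_algebra.
Set Implicit Arguments. Unset Strict Implicit. Unset Printing Implicit Defensive.
Import Order.TTheory GRing.Theory Num.Theory.
Local Open Scope ring_scope.

(* (u k, v k) = left/right endpoint of the block containing index k;
   this encodes a partition of [1,n] into intervals of consecutive indices. *)
Definition interval_partition (n : nat) (u v : nat -> nat) : Prop :=
  forall k, (1 <= k <= n)%N ->
    [/\ (1 <= u k <= k)%N, (k <= v k <= n)%N &
        forall j, (u k <= j <= v k)%N -> u j = u k /\ v j = v k].

(* number of blocks = number of right endpoints in [1,n] *)
Definition num_blocks (n : nat) (v : nat -> nat) : nat :=
  count (fun k => v k == k) (iota 1 n).

Definition sorted_at {R : realFieldType} (n : nat) (x : nat -> R) : Prop :=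
  forall i, (1 <= i < n)%N -> x i <= x i.+1.

(* m-twist system with parameter rho on n agents:
   x t k = sorted position of rank k at time t; u t, v t = block structure at time t. *)
Definition twist_system {R : realFieldType} (m n : nat) (rho : R)
  (x : nat -> nat -> R) (u v : nat -> nat -> nat) : Prop :=
  [/\ 0 < rho, rho <= 1/2 &
  forall t : nat,
    [/\ sorted_at n (x t), interval_partition n (u t) (v t),
        (num_blocks n (v t) <= m)%N &
        forall i, (1 <= i <= n)%N ->
          (1 - rho) * x t (u t i) + rho * x t (minn i.+1 (v t i)) <= x t.+1 i /\
          x t.+1 i <= rho * x t (maxn i.-1 (u t i)) + (1 - rho) * x t (v t i)]].

Definition Ppoly {R : realFieldType} (n : nat) (x : nat -> nat -> R) (t : nat) (z : R) : R :=
  \sum_(1 <= k < n.+1) x t k * z ^+ k.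

Definition Kpoly {R : realFieldType} (n : nat) (x : nat -> nat -> R) (v : nat -> nat -> nat)
  (t : nat) (z : R) : R :=
  \sum_(1 <= k < n.+1) (x t (v t k) - x t k) * z ^+ k.

(* Main.v *)
Require Import Defs.
From mathcomp Require Import all_boot all_order all_algebra.
From mathcomp Require Import ring lra zify.
Import Order.TTheory GRing.Theory Num.Theory.
Local Open Scope ring_scope.

Lemma sorted_mono (R : realFieldType) (n : nat) (X : nat -> R) :
  sorted_at n X -> forall i j, (1 <= i)%N -> (i <= j)%N -> (j <= n)%N -> X i <= X j.
Proof.
move=> hs i j hi; elim: j => [|j IH] hij hjn; first by lia.
case: (ltnP i j.+1) => h.
  apply: le_trans (IH _ _) (hs j _); lia.
have -> : j.+1 = i by lia.
by [].
Qed.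

Lemma tele (R : realFieldType) (A : nat -> R) (n : nat) :
  \sum_(1 <= k < n.+1) (A k.-1 - A k) = A 0%N - A n.
Proof.
elim: n => [|n IH]; first by rewrite big_geq // subrr.
by rewrite big_nat_recr //= IH; ring.
Qed.

Theorem lemma4 (R : realFieldType) (m n : nat) (rho : R)
  (x : nat -> nat -> R) (u v : nat -> nat -> nat) :
  twist_system m n rho x u v ->
  forall (z : R) (t : nat), 1 / rho < z ->
    Ppoly n x t z - Ppoly n x t.+1 z >= (rho * z - 1) * Kpoly n x v t z.
Proof.
move=> [hr0 hr1 hsys] z t hz.
have hz0 : 0 < z.
  apply: lt_trans hz; by rewrite divr_gt0.
have [hs hp _ hb] := hsys t.
set X := x t.
set A := fun j : nat => if j == 0%N then 0 else rho * z ^+ j.+1 * (X (v t j) - X j).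
have hAn : A n = 0.
  case: n hp hs hb {hsys} => [|n'] hp hs hb; first by rewrite /A.
  have [_ h2 _] := hp n'.+1 (ltac:(lia)).
  by rewrite /A /= (_ : v t n'.+1 = n'.+1) ?subrr ?mulr0 //; lia.
rewrite -subr_ge0.
have -> : Ppoly n x t z - Ppoly n x t.+1 z - (rho * z - 1) * Kpoly n x v t z =
  \sum_(1 <= k < n.+1) ((X k - x t.+1 k) * z ^+ k - (rho * z - 1) * ((X (v t k) - X k) * z ^+ k)).
  rewrite /Ppoly /Kpoly mulr_sumr -!sumrB; apply: eq_bigr => k _; rewrite /X; ring.
apply: (@le_trans _ _ (\sum_(1 <= k < n.+1) (A k.-1 - A k))).
  by rewrite tele hAn /A /= subrr.
rewrite big_nat [X in _ <= X]big_nat; apply: ler_sum => k /andP [hk1 hkn].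
have hkn' : (1 <= k <= n)%N by lia.
have [hu hv hblk] := hp k hkn'.
have [_ hup] := hb k hkn'.
have mono := @sorted_mono _ _ _ hs.
set y := x t.+1 k.
set V := X (v t k).
have hw : 0 <= z ^+ k by rewrite exprn_ge0 // ltW.
have hVk : X k <= V by apply: mono; lia.
case: (ltnP (u t k) k) => huk.
- have hp1 : maxn k.-1 (u t k) = k.-1 by lia.
  rewrite hp1 in hup.
  have hvk1 : v t k.-1 = v t k by have [_ ->] := hblk k.-1 (ltac:(lia)).
  have hk0 : (k.-1 == 0%N) = false by apply/eqP; lia.
  rewrite /A hk0 (_ : (k == 0%N) = false); last by apply/eqP; lia.
  rewrite hvk1 prednK; last by lia.
  rewrite -subr_ge0 exprS.
  rewrite (_ : _ - _ = z ^+ k * (rho * X k.-1 + (1 - rho) * V - y)); last first.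
    rewrite /V; ring.
  apply: mulr_ge0 => //; rewrite subr_ge0; exact: hup.
- have hp1 : maxn k.-1 (u t k) = k by lia.
  rewrite hp1 in hup.
  have hA0 : A k.-1 = 0.
    rewrite /A; case: eqP => // hk0.
    have [hu' hv' hblk'] := hp k.-1 (ltac:(lia)).
    have -> : v t k.-1 = k.-1.
      apply/eqP; rewrite eqn_leq; apply/andP; split; last by lia.
      rewrite leqNgt; apply/negP => hlt.
      have [h1 _] := hblk' k (ltac:(lia)).
      lia.
    by rewrite subrr mulr0.
  rewrite hA0 /A (_ : (k == 0%N) = false); last by apply/eqP; lia.
  rewrite -subr_ge0 exprS.
  rewrite (_ : _ - _ = z ^+ k * ((rho * X k + (1 - rho) * V - y) + rho * (V - X k))); last first.
    rewrite /V; ring.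
  apply: mulr_ge0 => //; apply: addr_ge0; first by rewrite subr_ge0; exact: hup.
  by apply: mulr_ge0; [exact: ltW | rewrite subr_ge0].
Qed.
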